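(* Let $a_1,\dots,a_n\in\mathbb{R}^d$ be the rows of $A$, let $k\ge1$ and $0<\epsilon<1$. Let $P$ be an $r$-dimensional linear subspace of $\mathbb{R}^d$ such that for all linear subspaces $W$ of dimension at most $k$, $$\sum_i\mathrm{dist}(a_i,P)-\sum_i\mathrm{dist}(a_i,P+W)\le\frac{\epsilon^2}{80}\mathrm{SubApx}_{k,1}(A).$$ Let $B\in\mathbb{R}^{d\times r}$ be an orthonormal basis for $P$ and set $\epsilon_c=\epsilon^2/6$. For each $i$ let $a_i^B\in\mathbb{R}^r$ satisfy $\mathrm{dist}(a_i,Ba_i^B)\le(1+\epsilon_c)\mathrm{dist}(a_i,P)$ and let $\mathrm{apx}_i$ satisfy $(1-\epsilon_c)\mathrm{dist}(a_i,P)\le\mathrm{apx}_i\le(1+\epsilon_c)\mathrm{dist}(a_i,P)$. Then for every shape $S$ lying in a $k$-dimensional subspace, $$\sum_i\sqrt{\mathrm{dist}(Ba_i^B,S)^2+\mathrm{apx}_i^2}=(1\pm5\epsilon)\sum_i\mathrm{dist}(a_i,S).$$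
   Context: $\mathrm{dist}(x,S)=\inf_{s\in S}\|x-s\|_2$. $\mathrm{SubApx}_{k,1}(A)=\min\{\sum_{i=1}^n\mathrm{dist}(a_i,Q): Q\text{ a linear subspace of }\mathbb{R}^d,\ \dim Q\le k\}$. $P+W$ is the span of $P\cup W$. A ''shape lying in a $k$-dimensional subspace'' is any nonempty set $S\subseteq\mathbb{R}^d$ contained in a linear subspace of dimension at most $k$. $x=(1\pm\epsilon)y$ means $(1-\epsilon)y\le x\le(1+\epsilon)y$. *)

(* Defs.v *)
(* classical reals. Vectors of R^d are functions nat -> R,
   of which only the coordinates j < d are ever inspected. *)
From Stdlib Require Import Reals Lra Lia Classical ClassicalEpsilon.
Open Scope R_scope.

Definition Vec := nat -> R.

Fixpoint fsum (n : nat) (f : nat -> R) : R :=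
  match n with
  | O => 0
  | S m => fsum m f + f m
  end.

Definition norm (d : nat) (x : Vec) : R := sqrt (fsum d (fun j => x j ^ 2)).

Definition vsub (x y : Vec) : Vec := fun j => x j - y j.

Definition is_inf (E : R -> Prop) (m : R) : Prop :=
  (forall y, E y -> m <= y) /\ (forall b, (forall y, E y -> b <= y) -> b <= m).

(* infimum (unspecified if it does not exist) *)
Definition Rinf (E : R -> Prop) : R :=
  epsilon (inhabits 0) (fun m => is_inf E m).

Definition setdist (d : nat) (x : Vec) (S : Vec -> Prop) : R :=
  Rinf (fun v => exists s, S s /\ v = norm d (vsub x s)).

(* matrix-vector product: the vector sum_{t<m} c t * vs t, where vs t are
   the m columns *)
Definition lincomb (d m : nat) (vs : nat -> Vec) (c : nat -> R) : Vec :=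
  fun j => fsum m (fun t => c t * vs t j).

Definition span (d m : nat) (vs : nat -> Vec) : Vec -> Prop :=
  fun x => exists c : nat -> R, forall j, (j < d)%nat -> x j = lincomb d m vs c j.

Definition catfam (m : nat) (vs ws : nat -> Vec) : nat -> Vec :=
  fun t => if Nat.ltb t m then vs t else ws (t - m)%nat.

(* SubApx_{k,1}(A) for the n rows a 0..n-1 : inf (= min) over linear subspaces
   Q of dimension <= k, i.e. spans of k vectors, of sum_i dist(a_i, Q) *)
Definition SubApx (d n k : nat) (a : nat -> Vec) : R :=
  Rinf (fun v => exists U : nat -> Vec,
          v = fsum n (fun i => setdist d (a i) (span d k U))).

Definition orthonormal (d r : nat) (B : nat -> Vec) : Prop :=
  forall s t, (s < r)%nat -> (t < r)%nat ->
    fsum d (fun j => B s j * B t j) = if Nat.eqb s t then 1 else 0.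

(* Main.v *)
Require Import Defs.
From Stdlib Require Import Reals Lra Lia Psatz Classical ClassicalEpsilon.
Open Scope R_scope.

Lemma fsum_ext n f g : (forall j, (j < n)%nat -> f j = g j) -> fsum n f = fsum n g.
Proof. induction n; simpl; intros H; [reflexivity|]. rewrite IHn by (intros; apply H; lia). rewrite H by lia; reflexivity. Qed.

Lemma fsum_plus n f g : fsum n (fun j => f j + g j) = fsum n f + fsum n g.
Proof. induction n; simpl; [ring|]. rewrite IHn; ring. Qed.

Lemma fsum_scal n c f : fsum n (fun j => c * f j) = c * fsum n f.
Proof. induction n; simpl; [ring|]. rewrite IHn; ring. Qed.

Lemma fsum_zero n f : (forall j, (j<n)%nat -> f j = 0) -> fsum n f = 0.
Proof. intros H. transitivity (fsum n (fun _ => 0 * 0)). apply fsum_ext; intros; rewrite H by lia; ring.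
 rewrite fsum_scal; ring. Qed.

Lemma fsum_nonneg n f : (forall j, (j < n)%nat -> 0 <= f j) -> 0 <= fsum n f.
Proof. induction n; simpl; intros H; [lra|]. pose proof (H n ltac:(lia)). pose proof (IHn ltac:(intros; apply H; lia)). lra. Qed.

Lemma fsum_le n f g : (forall j, (j < n)%nat -> f j <= g j) -> fsum n f <= fsum n g.
Proof. induction n; simpl; intros H; [lra|]. pose proof (H n ltac:(lia)). pose proof (IHn ltac:(intros; apply H; lia)). lra. Qed.

Lemma fsum_swap d m (F : nat -> nat -> R) :
  fsum d (fun j => fsum m (fun t => F t j)) = fsum m (fun t => fsum d (fun j => F t j)).
Proof. induction d; simpl. { symmetry; apply fsum_zero; reflexivity. }
 rewrite IHd. rewrite <- fsum_plus. reflexivity. Qed.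

Lemma fsum_split r k f : fsum (r + k) f = fsum r f + fsum k (fun t => f (r + t)%nat).
Proof. induction k; simpl. rewrite Nat.add_0_r; ring. rewrite Nat.add_succ_r; simpl. rewrite IHk; ring. Qed.

Lemma fsum_delta r (c : nat -> R) s : (s < r)%nat ->
  fsum r (fun t => c t * (if Nat.eqb s t then 1 else 0)) = c s.
Proof. induction r; intros H; [lia|]. simpl. destruct (Nat.eq_dec s r) as [->|Hne].
 - rewrite Nat.eqb_refl. rewrite fsum_zero. ring. intros j Hj. destruct (Nat.eqb_spec r j); [lia|ring].
 - rewrite IHr by lia. destruct (Nat.eqb_spec s r); [lia|ring]. Qed.
Definition ip (d : nat) (x y : Vec) : R := fsum d (fun j => x j * y j).

Lemma norm_ip d x : norm d x = sqrt (ip d x x).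
Proof. unfold norm, ip. f_equal. apply fsum_ext; intros; ring. Qed.

Lemma ip_nonneg d x : 0 <= ip d x x.
Proof. apply fsum_nonneg; intros; nra. Qed.

Lemma norm_nonneg d x : 0 <= norm d x.
Proof. rewrite norm_ip; apply sqrt_pos. Qed.

Lemma norm_sq d x : norm d x ^ 2 = ip d x x.
Proof. rewrite norm_ip. simpl. rewrite Rmult_1_r. apply sqrt_sqrt, ip_nonneg. Qed.

Lemma ip_sym d x y : ip d x y = ip d y x.
Proof. apply fsum_ext; intros; ring. Qed.

Lemma ip_ext d x x' y y' : (forall j, (j<d)%nat -> x j = x' j) -> (forall j, (j<d)%nat -> y j = y' j) ->
  ip d x y = ip d x' y'.
Proof. intros H1 H2; apply fsum_ext; intros; rewrite H1, H2 by lia; ring. Qed.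

Lemma ip_expand d x y t :
  ip d (fun j => x j + t * y j) (fun j => x j + t * y j) = ip d x x + 2 * t * ip d x y + t * t * ip d y y.
Proof. unfold ip; induction d; simpl; [ring|]. rewrite IHd; ring. Qed.

Lemma discr A Bv C : 0 <= A -> (forall t, 0 <= t * t * A - 2 * t * Bv + C) -> Bv * Bv <= A * C.
Proof. intros HA H. destruct (Req_dec A 0) as [H0|H0].
 - subst. destruct (Req_dec Bv 0) as [->|HB]; [lra|].
   specialize (H ((C + 1) / (2 * Bv))). exfalso.
   replace (2 * ((C + 1) / (2 * Bv)) * Bv) with (C + 1) in H by (field; auto). lra.
 - specialize (H (Bv / A)).
   replace (Bv / A * (Bv / A) * A - 2 * (Bv / A) * Bv + C) with (C - Bv * Bv / A) in H by (field; auto).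
   assert (0 < A) by lra. apply Rmult_le_reg_r with (/A). apply Rinv_0_lt_compat; lra.
   replace (A * C * / A) with C by (field; auto). unfold Rdiv in H. lra. Qed.

Lemma cauchy_schwarz d x y : ip d x y * ip d x y <= ip d x x * ip d y y.
Proof. rewrite (Rmult_comm (ip d x x)). apply discr. apply ip_nonneg.
 intros t. pose proof (ip_nonneg d (fun j => x j + (-t) * y j)). rewrite ip_expand in H.
 rewrite (ip_sym d x y) in *. lra. Qed.

Lemma ip_le_norm d x y : ip d x y <= norm d x * norm d y.
Proof. rewrite !norm_ip, <- sqrt_mult by apply ip_nonneg.
 destruct (Rle_dec (ip d x y) 0). pose proof (sqrt_pos (ip d x x * ip d y y)); lra.
 rewrite <- (sqrt_square (ip d x y)) by lra. apply sqrt_le_1_alt. pose proof (cauchy_schwarz d x y). lra. Qed.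

Lemma norm_triangle d x y z : norm d (vsub x z) <= norm d (vsub x y) + norm d (vsub y z).
Proof.
 pose proof (norm_nonneg d (vsub x y)). pose proof (norm_nonneg d (vsub y z)).
 rewrite (norm_ip d (vsub x z)).
 rewrite <- (sqrt_square (norm d (vsub x y) + norm d (vsub y z))) by lra.
 apply sqrt_le_1_alt.
 assert (E : ip d (vsub x z) (vsub x z) = ip d (fun j => vsub x y j + 1 * vsub y z j) (fun j => vsub x y j + 1 * vsub y z j)).
 { apply ip_ext; intros; unfold vsub; ring. }
 rewrite E, ip_expand. pose proof (ip_le_norm d (vsub x y) (vsub y z)).
 pose proof (norm_sq d (vsub x y)). pose proof (norm_sq d (vsub y z)). simpl in *. nra. Qed.

Lemma norm_sym d x y : norm d (vsub x y) = norm d (vsub y x).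
Proof. unfold norm; f_equal; apply fsum_ext; intros; unfold vsub; ring. Qed.

Lemma lincomb_lin d m vs c1 c2 al be j :
  lincomb d m vs (fun t => al * c1 t + be * c2 t) j = al * lincomb d m vs c1 j + be * lincomb d m vs c2 j.
Proof. unfold lincomb; induction m; simpl; [ring|]. rewrite IHm; ring. Qed.

Lemma lincomb_zero d m vs j : lincomb d m vs (fun _ => 0) j = 0.
Proof. unfold lincomb. apply fsum_zero; intros; ring. Qed.

Lemma lincomb_cat d r k vs ws c1 c2 j :
  lincomb d (r + k) (catfam r vs ws) (fun t => if Nat.ltb t r then c1 t else c2 (t - r)%nat) j
  = lincomb d r vs c1 j + lincomb d k ws c2 j.
Proof. unfold lincomb. rewrite fsum_split. f_equal.
 - apply fsum_ext; intros t Ht. unfold catfam. destruct (Nat.ltb_spec t r); [reflexivity|lia].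
 - apply fsum_ext; intros t Ht. unfold catfam. destruct (Nat.ltb_spec (r + t) r); [lia|].
   replace (r + t - r)%nat with t by lia. reflexivity. Qed.

Lemma ip_lincomb d m x vs c :
  ip d x (lincomb d m vs c) = fsum m (fun t => c t * ip d x (vs t)).
Proof. unfold ip, lincomb.
 transitivity (fsum d (fun j => fsum m (fun t => c t * (x j * vs t j)))).
 { apply fsum_ext; intros. rewrite <- fsum_scal. apply fsum_ext; intros; ring. }
 rewrite fsum_swap. apply fsum_ext; intros. apply fsum_scal. Qed.
Lemma inf_exists (E : R -> Prop) : (exists y, E y) -> (forall y, E y -> 0 <= y) -> exists m, is_inf E m.
Proof. intros [y0 Hy0] Hlb.
 destruct (completeness (fun x => E (- x))) as [m [Hub Hleast]].
 { exists 0. intros x Hx. apply Hlb in Hx. lra. }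
 { exists (- y0). rewrite Ropp_involutive; auto. }
 exists (- m). split.
 - intros y Hy. assert (- y <= m). apply Hub. rewrite Ropp_involutive; auto. lra.
 - intros b Hb. assert (m <= - b). apply Hleast. intros x Hx. apply Hb in Hx. lra. lra. Qed.

Lemma Rinf_spec E : (exists y, E y) -> (forall y, E y -> 0 <= y) -> is_inf E (Rinf E).
Proof. intros H1 H2. unfold Rinf. apply epsilon_spec. apply inf_exists; auto. Qed.

Section SD.
Variables (d : nat) (x : Vec) (S : Vec -> Prop).
Hypothesis HS : exists s, S s.

Lemma sd_spec : is_inf (fun v => exists s, S s /\ v = norm d (vsub x s)) (setdist d x S).
Proof. unfold setdist. apply Rinf_spec.
 - destruct HS as [s Hs]. eauto.
 - intros y [s [_ ->]]. apply norm_nonneg. Qed.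

Lemma sd_le s : S s -> setdist d x S <= norm d (vsub x s).
Proof. intros Hs. apply (proj1 sd_spec). eauto. Qed.

Lemma sd_glb b : (forall s, S s -> b <= norm d (vsub x s)) -> b <= setdist d x S.
Proof. intros H. apply (proj2 sd_spec). intros y [s [Hs ->]]. auto. Qed.

Lemma sd_nonneg : 0 <= setdist d x S.
Proof. apply sd_glb. intros; apply norm_nonneg. Qed.

Lemma sd_approx eta : 0 < eta -> exists s, S s /\ norm d (vsub x s) < setdist d x S + eta.
Proof. intros He. apply NNPP. intros Hn.
 assert (setdist d x S + eta <= setdist d x S). 2: lra.
 apply sd_glb. intros s Hs. apply Rnot_lt_le. intros Hlt. apply Hn. eauto. Qed.
End SD.

Lemma sd_lip d x y S : (exists s, S s) -> setdist d x S <= norm d (vsub x y) + setdist d y S.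
Proof. intros HS. assert (setdist d x S - norm d (vsub x y) <= setdist d y S). 2: lra.
 apply sd_glb; auto. intros s Hs. pose proof (sd_le d x S HS s Hs). pose proof (norm_triangle d x y s). lra. Qed.

Lemma sd_mono d x S T : (exists s, S s) -> (forall s, S s -> T s) -> setdist d x T <= setdist d x S.
Proof. intros HS HT. apply sd_glb; auto. intros s Hs. apply sd_le; auto. exists s; auto. Qed.

Lemma le_eps a b : (forall eta, 0 < eta -> a <= b + eta) -> a <= b.
Proof. intros H. apply Rnot_lt_le; intros Hlt. specialize (H ((a - b)/2) ltac:(lra)). lra. Qed.

Lemma mink a1 b1 a2 b2 : sqrt (a1 ^ 2 + b1 ^ 2) <= sqrt (a2 ^ 2 + b2 ^ 2) + Rabs (a1 - a2) + Rabs (b1 - b2).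
Proof. set (A := sqrt (a2 ^ 2 + b2 ^ 2)).
 assert (HA : 0 <= A) by apply sqrt_pos.
 assert (HA2 : A * A = a2^2 + b2^2) by (apply sqrt_sqrt; nra).
 assert (Ha : Rabs a2 <= A). { rewrite <- sqrt_Rsqr_abs. apply sqrt_le_1_alt. unfold Rsqr; nra. }
 assert (Hb : Rabs b2 <= A). { rewrite <- sqrt_Rsqr_abs. apply sqrt_le_1_alt. unfold Rsqr; nra. }
 pose proof (Rabs_pos (a1 - a2)). pose proof (Rabs_pos (b1 - b2)).
 rewrite <- (sqrt_square (A + Rabs (a1 - a2) + Rabs (b1 - b2))) by lra.
 apply sqrt_le_1_alt.
 assert (a1 ^ 2 <= a2 ^ 2 + 2 * Rabs a2 * Rabs (a1 - a2) + Rabs (a1 - a2) ^ 2).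
 { rewrite pow2_abs. pose proof (Rle_abs (a2 * (a1 - a2))). rewrite Rabs_mult in H1. nra. }
 assert (b1 ^ 2 <= b2 ^ 2 + 2 * Rabs b2 * Rabs (b1 - b2) + Rabs (b1 - b2) ^ 2).
 { rewrite pow2_abs. pose proof (Rle_abs (b2 * (b1 - b2))). rewrite Rabs_mult in H2. nra. }
 nra. Qed.
Lemma abs_inv x b : Rabs x <= b -> - b <= x <= b.
Proof. intros H. pose proof (Rle_abs x). pose proof (Rle_abs (- x)). rewrite Rabs_Ropp in H1. lra. Qed.
Lemma ip_sub d x y z : ip d (vsub x y) z = ip d x z - ip d y z.
Proof. unfold ip, vsub. induction d as [|d IH]; simpl; [ring|]. rewrite IH; ring. Qed.

Lemma lincomb_scal d m vs c al j : lincomb d m vs (fun t => al * c t) j = al * lincomb d m vs c j.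
Proof. unfold lincomb; induction m; simpl; [ring|]. rewrite IHm; ring. Qed.

Lemma real_key X N D w beta : 0 <= X -> 0 <= N -> 0 <= w ->
  X ^ 2 = N ^ 2 + D ^ 2 + 2 * beta -> beta ^ 2 <= N ^ 2 * w ^ 2 ->
  Rabs (X - sqrt (N ^ 2 + D ^ 2)) <= 2 * w.
Proof. intros HX HN Hw HXe Hb. set (Y := sqrt (N ^ 2 + D ^ 2)).
 assert (HY0 : 0 <= Y) by apply sqrt_pos.
 assert (HY2 : Y * Y = N ^ 2 + D ^ 2) by (apply sqrt_sqrt; nra).
 assert (HNY : N <= Y) by nra.
 assert (Hab : Rabs beta <= N * w).
 { destruct (Rle_dec (Rabs beta) (N * w)) as [|Hn]; auto. pose proof (pow2_abs beta). pose proof (Rabs_pos beta). assert (0 <= N * w) by nra. assert (0 < (Rabs beta - N * w) * (Rabs beta + N * w)) by (apply Rmult_lt_0_compat; lra). nra. }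
 assert (Hab' : Rabs beta <= Y * w) by nra.
 assert (Hd : (X - Y) * (X + Y) = 2 * beta) by nra.
 apply Rabs_le. pose proof (Rle_abs beta). pose proof (Rle_abs (- beta)). rewrite Rabs_Ropp in H0.
 split; nra. Qed.

Section Point.
Variables (d r k : nat) (B U : nat -> Vec) (a : Vec) (S : Vec -> Prop).
Hypothesis HB : orthonormal d r B.
Hypothesis HS : exists s, S s.
Hypothesis HSU : forall x, S x -> span d k U x.

Let cp t := ip d a (B t).
Let p := lincomb d r B cp.
Let h := vsub a p.
Let P := span d r B.
Let Q := span d (r + k) (catfam r B U).
Let D := setdist d a P.
Let G := setdist d a Q.

Lemma hB t : (t < r)%nat -> ip d h (B t) = 0.
Proof. intros Ht. unfold h. rewrite ip_sub. rewrite (ip_sym d p). unfold p. rewrite ip_lincomb.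
 rewrite (fsum_ext _ _ (fun u => cp u * (if Nat.eqb t u then 1 else 0))).
 rewrite fsum_delta by auto. unfold cp. rewrite ip_sym. ring.
 intros u Hu. rewrite <- (HB t u) by auto. reflexivity. Qed.

Lemma h_orth v : P v -> ip d h v = 0.
Proof. intros [c Hc]. rewrite (ip_ext d h h v (lincomb d r B c)) by auto.
 rewrite ip_lincomb. apply fsum_zero. intros t Ht. rewrite hB by auto. ring. Qed.

Lemma P_p : P p.
Proof. exists cp. reflexivity. Qed.

Lemma Q_p : Q p.
Proof. exists (fun t => if Nat.ltb t r then cp t else 0). intros j Hj.
 rewrite (lincomb_cat d r k B U cp (fun _ => 0)). rewrite lincomb_zero. unfold p; ring. Qed.

Lemma pyth v : P v -> norm d (vsub a v) ^ 2 = norm d h ^ 2 + norm d (vsub p v) ^ 2.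
Proof. intros [c Hc]. rewrite !norm_sq.
 rewrite (ip_ext d (vsub a v) (fun j => h j + 1 * vsub p v j) (vsub a v) (fun j => h j + 1 * vsub p v j))
  by (intros; unfold h, vsub; ring).
 rewrite ip_expand. rewrite (h_orth (vsub p v)). ring.
 exists (fun t => 1 * cp t + (-1) * c t). intros j Hj. rewrite lincomb_lin. unfold vsub. rewrite Hc by auto.
 unfold p. ring. Qed.

Lemma D_eq : D = norm d h.
Proof. apply Rle_antisym.
 - unfold D. apply (sd_le d a P). exists p; apply P_p. apply P_p.
 - unfold D. apply sd_glb. exists p; apply P_p. intros v Hv. pose proof (pyth v Hv).
   pose proof (norm_nonneg d h). pose proof (norm_nonneg d (vsub a v)). pose proof (norm_nonneg d (vsub p v)). nra. Qed.

Lemma HQ : exists s, Q s.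
Proof. exists p; apply Q_p. Qed.

Lemma G_nonneg : 0 <= G.
Proof. apply sd_nonneg, HQ. Qed.

Lemma G_le_D : G <= D.
Proof. rewrite D_eq. unfold G. apply (sd_le d a Q HQ). apply Q_p. Qed.

Lemma beta_bound s : S s -> ip d h (vsub p s) ^ 2 <= norm d (vsub p s) ^ 2 * (D ^ 2 - G ^ 2).
Proof. intros Hs. destruct (HSU s Hs) as [cs Hcs].
 rewrite norm_sq. replace (ip d h (vsub p s) ^ 2) with ((- ip d h (vsub p s)) * (- ip d h (vsub p s))) by ring.
 apply discr. apply ip_nonneg. intros t.
 set (y := fun j => p j + t * (s j - p j)).
 assert (Hy : Q y).
 { exists (fun u => if Nat.ltb u r then (1 - t) * cp u else t * cs (u - r)%nat). intros j Hj.
   rewrite (lincomb_cat d r k B U (fun u => (1 - t) * cp u) (fun u => t * cs u)).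
   rewrite !lincomb_scal. unfold y. rewrite Hcs by auto. unfold p; ring. }
 pose proof (sd_le d a Q HQ y Hy). fold G in H.
 pose proof G_nonneg.
 assert (E : norm d (vsub a y) ^ 2 = ip d h h + 2 * t * ip d h (vsub p s) + t * t * ip d (vsub p s) (vsub p s)).
 { rewrite norm_sq. rewrite <- ip_expand. apply ip_ext; intros; unfold y, h, vsub; ring. }
 rewrite <- norm_sq in E. rewrite <- D_eq in E.
 assert (G ^ 2 <= norm d (vsub a y) ^ 2) by nra. nra. Qed.

Let w := sqrt (D ^ 2 - G ^ 2).

Lemma w_sq : w ^ 2 = D ^ 2 - G ^ 2.
Proof. unfold w. rewrite <- Rsqr_pow2. apply Rsqr_sqrt. pose proof G_nonneg. pose proof G_le_D. nra. Qed.

Lemma per_s s : S s -> Rabs (norm d (vsub a s) - sqrt (norm d (vsub p s) ^ 2 + D ^ 2)) <= 2 * w.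
Proof. intros Hs. apply real_key with (beta := ip d h (vsub p s)).
 apply norm_nonneg. apply norm_nonneg. apply sqrt_pos.
 - rewrite D_eq, !norm_sq.
   rewrite (ip_ext d (vsub a s) (fun j => h j + 1 * vsub p s j) (vsub a s) (fun j => h j + 1 * vsub p s j))
    by (intros; unfold h, vsub; ring).
   rewrite ip_expand. ring.
 - rewrite w_sq. apply beta_bound; auto. Qed.

Lemma M_vs_d : Rabs (sqrt (setdist d p S ^ 2 + D ^ 2) - setdist d a S) <= 2 * w.
Proof. pose proof (sd_nonneg d p S HS) as Hdp.
 apply Rabs_le. split.
 - apply le_eps. intros eta He. destruct (sd_approx d p S HS eta He) as [s [Hs Hlt]].
   pose proof (sd_le d a S HS s Hs). pose proof (per_s s Hs). apply abs_inv in H0.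
   pose proof (mink (norm d (vsub p s)) D (setdist d p S) D).
   replace (D - D) with 0 in H1 by ring. rewrite Rabs_R0 in H1.
   pose proof (sd_le d p S HS s Hs).
   rewrite Rabs_right in H1 by lra. lra.
 - apply le_eps. intros eta He. destruct (sd_approx d a S HS eta He) as [s [Hs Hlt]].
   pose proof (per_s s Hs). apply abs_inv in H.
   pose proof (sd_le d p S HS s Hs).
   assert (sqrt (setdist d p S ^ 2 + D ^ 2) <= sqrt (norm d (vsub p s) ^ 2 + D ^ 2)).
   { apply sqrt_le_1_alt. nra. }
   lra. Qed.

Lemma point (eps apx : R) (q : Vec) (cq : nat -> R) :
  0 < eps < 1 -> (forall j, (j < d)%nat -> q j = lincomb d r B cq j) ->
  norm d (vsub a q) <= (1 + eps ^ 2 / 6) * D ->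
  (1 - eps ^ 2 / 6) * D <= apx /\ apx <= (1 + eps ^ 2 / 6) * D ->
  Rabs (sqrt (setdist d q S ^ 2 + apx ^ 2) - setdist d a S) <= 3 * eps * D + 2 * (D - G) / eps.
Proof. intros Heps Hq Haq Hapx.
 assert (HqP : P q) by (exists cq; auto).
 pose proof (pyth q HqP) as Hp. rewrite <- D_eq in Hp.
 assert (HD : 0 <= D) by (rewrite D_eq; apply norm_nonneg).
 pose proof (norm_nonneg d (vsub a q)). pose proof (norm_nonneg d (vsub p q)).
 assert (Hpq : norm d (vsub p q) <= eps * D).
 { assert (norm d (vsub p q) ^ 2 <= (eps * D) ^ 2).
   { assert (norm d (vsub a q) ^ 2 <= ((1 + eps ^ 2 / 6) * D) ^ 2) by (apply pow_incr; lra).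
     assert (((1 + eps ^ 2 / 6) * D) ^ 2 - D ^ 2 <= (eps * D) ^ 2).
     { replace (((1 + eps ^ 2 / 6) * D) ^ 2 - D ^ 2) with ((eps^2/3 + eps^4/36) * D^2) by field.
       replace ((eps * D) ^ 2) with (eps ^ 2 * D ^ 2) by ring.
       apply Rmult_le_compat_r. nra. assert (0 <= eps ^ 2 <= 1) by (split; nra). replace (eps ^ 4) with (eps ^ 2 * eps ^ 2) by ring. nra. }
     lra. }
   apply Rsqr_incr_0_var. unfold Rsqr; simpl in H1; nra. nra. }
 assert (Hlip : Rabs (setdist d q S - setdist d p S) <= eps * D).
 { pose proof (sd_lip d q p S HS). pose proof (sd_lip d p q S HS). rewrite (norm_sym d q p) in H1.
   apply Rabs_le; split; lra. }
 assert (Happ : Rabs (apx - D) <= eps * D).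
 { apply Rabs_le; split; nra. }
 assert (HTM : Rabs (sqrt (setdist d q S ^ 2 + apx ^ 2) - sqrt (setdist d p S ^ 2 + D ^ 2)) <= 2 * eps * D).
 { pose proof (mink (setdist d q S) apx (setdist d p S) D).
   pose proof (mink (setdist d p S) D (setdist d q S) apx).
   rewrite Rabs_minus_sym in H2. rewrite (Rabs_minus_sym D apx) in H2.
   apply Rabs_le; split; lra. }
 pose proof M_vs_d.
 assert (Hw : 2 * w <= eps * D + 2 * (D - G) / eps).
 { pose proof G_nonneg. pose proof G_le_D. pose proof w_sq.
   assert (0 <= w) by apply sqrt_pos.
   set (z := (D - G) / eps). assert (Hz : D - G = z * eps) by (unfold z; field; lra).
   assert (0 <= z) by (unfold z; apply Rmult_le_pos; [lra|apply Rlt_le, Rinv_0_lt_compat; lra]).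
   replace (2 * (D - G) / eps) with (2 * z) by (unfold z; field; lra).
   apply Rsqr_incr_0_var. unfold Rsqr.
   assert (D ^ 2 - G ^ 2 <= 2 * (z * eps) * D) by (replace (D ^ 2 - G ^ 2) with ((D - G) * (D + G)) by ring; rewrite <- Hz; nra).
   assert (0 <= (eps * D - 2 * z) ^ 2) by apply pow2_ge_0. nra. nra. }
 apply Rabs_le. apply abs_inv in HTM. apply abs_inv in H1. split; lra. Qed.
End Point.
Lemma fsum_bound n eps (Df Gf : nat -> R) : eps <> 0 ->
  fsum n (fun i => 3 * eps * Df i + 2 * (Df i - Gf i) / eps)
  = 3 * eps * fsum n Df + 2 * (fsum n Df - fsum n Gf) / eps.
Proof. intros He. induction n; simpl. field; auto. rewrite IHn. field; auto. Qed.

Lemma fsum_minus n f g : fsum n (fun i => f i - g i) = fsum n f - fsum n g.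
Proof. induction n; simpl; [ring|]. rewrite IHn; ring. Qed.

Lemma span_ne d m vs : exists s, span d m vs s.
Proof. exists (fun _ => 0). exists (fun _ => 0). intros j Hj. rewrite lincomb_zero. reflexivity. Qed.

Lemma SubApx_le d n k a U : SubApx d n k a <= fsum n (fun i => setdist d (a i) (span d k U)).
Proof. unfold SubApx.
 assert (H : is_inf (fun v => exists U : nat -> Vec, v = fsum n (fun i => setdist d (a i) (span d k U)))
   (Rinf (fun v => exists U : nat -> Vec, v = fsum n (fun i => setdist d (a i) (span d k U))))).
 { apply Rinf_spec. eexists; exists U; reflexivity.
   intros y [U' ->]. apply fsum_nonneg. intros; apply sd_nonneg, span_ne. }
 apply (proj1 H). exists U; reflexivity. Qed.

Theorem theorem4 (d n k r : nat) (a : nat -> Vec) (eps : R) (B : nat -> Vec)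
  (aB : nat -> (nat -> R)) (apx : nat -> R) :
  (1 <= k)%nat -> 0 < eps < 1 ->
  orthonormal d r B ->
  (* P := span d r B; P + W is spanned by the columns of B and of U *)
  (forall U : nat -> Vec,
     fsum n (fun i => setdist d (a i) (span d r B))
     - fsum n (fun i => setdist d (a i) (span d (r + k) (catfam r B U)))
     <= eps ^ 2 / 80 * SubApx d n k a) ->
  (forall i, (i < n)%nat ->
     norm d (vsub (a i) (lincomb d r B (aB i)))
       <= (1 + eps ^ 2 / 6) * setdist d (a i) (span d r B)) ->
  (forall i, (i < n)%nat ->
     (1 - eps ^ 2 / 6) * setdist d (a i) (span d r B) <= apx i /\
     apx i <= (1 + eps ^ 2 / 6) * setdist d (a i) (span d r B)) ->
  forall (S : Vec -> Prop) (U : nat -> Vec),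
    (exists s, S s) ->
    (forall x, S x -> span d k U x) ->
    (1 - 5 * eps) * fsum n (fun i => setdist d (a i) S)
      <= fsum n (fun i => sqrt (setdist d (lincomb d r B (aB i)) S ^ 2 + apx i ^ 2)) /\
    fsum n (fun i => sqrt (setdist d (lincomb d r B (aB i)) S ^ 2 + apx i ^ 2))
      <= (1 + 5 * eps) * fsum n (fun i => setdist d (a i) S).
Proof.
 intros Hk Heps HB Hgood Hq Happ S U HS HSU.
 set (T := fun i => sqrt (setdist d (lincomb d r B (aB i)) S ^ 2 + apx i ^ 2)).
 set (dS := fun i => setdist d (a i) S).
 set (Df := fun i => setdist d (a i) (span d r B)).
 set (Gf := fun i => setdist d (a i) (span d (r + k) (catfam r B U))).
 set (bd := fun i => 3 * eps * Df i + 2 * (Df i - Gf i) / eps).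
 assert (Hpt : forall i, (i < n)%nat -> Rabs (T i - dS i) <= bd i).
 { intros i Hi. unfold T, dS, bd, Df, Gf.
   apply (point d r k B U (a i) S HB HS HSU eps (apx i) (lincomb d r B (aB i)) (aB i) Heps).
   intros; reflexivity. apply Hq; auto. apply Happ; auto. }
 assert (Hup : fsum n T <= fsum n dS + fsum n bd).
 { rewrite <- fsum_plus. apply fsum_le. intros i Hi. pose proof (abs_inv _ _ (Hpt i Hi)). lra. }
 assert (Hlo : fsum n dS - fsum n bd <= fsum n T).
 { rewrite <- fsum_minus. apply fsum_le. intros i Hi. pose proof (abs_inv _ _ (Hpt i Hi)). lra. }
 unfold bd in Hup, Hlo. rewrite fsum_bound in Hup, Hlo by lra.
 set (O := fsum n dS) in *. set (X := fsum n Df) in *. set (Y := fsum n Gf) in *.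
 assert (HO : 0 <= O). { apply fsum_nonneg. intros; apply sd_nonneg; auto. }
 assert (HYO : Y <= O).
 { apply fsum_le. intros i Hi. unfold Gf, dS. apply sd_mono; auto.
   intros s Hs. destruct (HSU s Hs) as [cs Hcs]. exists (fun t => if Nat.ltb t r then 0 else cs (t - r)%nat).
   intros j Hj. rewrite (lincomb_cat d r k B U (fun _ => 0) cs). rewrite lincomb_zero, Hcs by auto. ring. }
 assert (HSA : SubApx d n k a <= O).
 { apply Rle_trans with (fsum n (fun i => setdist d (a i) (span d k U))).
   - apply SubApx_le.
   - apply fsum_le. intros i Hi. apply sd_mono; auto. }
 pose proof (Hgood U) as HE. fold Df Gf in HE. fold X Y in HE.
 assert (HE2 : X - Y <= eps ^ 2 / 80 * O).
 { apply Rle_trans with (1 := HE). apply Rmult_le_compat_l; [|auto]. nra. }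
 assert (HZ : 2 * (X - Y) / eps <= eps * O / 40).
 { unfold Rdiv. apply Rle_trans with (2 * (eps ^ 2 / 80 * O) * / eps).
   apply Rmult_le_compat_r. apply Rlt_le, Rinv_0_lt_compat; lra. lra.
   right. field. lra. }
 assert (HX : X <= O + eps ^ 2 / 80 * O) by lra.
 assert (H3 : 3 * eps * X <= 3 * eps * (O + eps ^ 2 / 80 * O)) by (apply Rmult_le_compat_l; lra).
 assert (eps ^ 2 * O <= O) by (assert (eps ^ 2 <= 1) by nra; nra).
 assert (eps * (eps ^ 2 * O) <= eps * O) by (apply Rmult_le_compat_l; lra).
 split; nra.
Qed.
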